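(* Let $q\in\mathbb{C}$ with $|q|<1$, let $n$ be a positive integer and $m\ge0$ an integer. Then for every $x\in[0,1]$, $$[n]_q^m\,\mathbb{B}_{n,q}(x^m\mid x)=\sum_{k=0}^n\binom{n}{k}_q x^k\,[k]_q!\,q^{\binom{k}{2}}S(m,k:q).$$
   Context: For a number $x$, $[x]_q=\frac{1-q^x}{1-q}$; $[n]_q!=[n]_q\cdots[1]_q$, $[0]_q!=1$; $\binom{n}{k}_q=\frac{[n]_q!}{[k]_q![n-k]_q!}$ for $0\le k\le n$ and $0$ for $k>n$; $\binom{j}{2}=j(j-1)/2$. $(1-b)_q^n=\prod_{i=1}^n(1-bq^{i-1})$. For integers $k,n\ge0$, $B_{k,n}(x,q)=\binom{n}{k}_q x^k(1-x)_q^{n-k}$ if $n\ge k$ and $0$ otherwise. For $f\in C[0,1]$, $\mathbb{B}_{n,q}(f\mid x)=\sum_{k=0}^n B_{k,n}(x,q)f\!\left(\frac{[k]_q}{[n]_q}\right)$; here $f(t)=t^m$. The $q$-Stirling numbers of the second kind $S(m,k:q)$ are defined by $\frac{q^{-\binom{k}{2}}}{[k]_q!}\sum_{j=0}^k(-1)^{k-j}\binom{k}{j}_q q^{\binom{k-j}{2}}e^{[j]_q t}=\sum_{m=0}^\infty S(m,k:q)\frac{t^m}{m!}$, i.e. $S(m,k:q)=\frac{q^{-\binom{k}{2}}}{[k]_q!}\sum_{j=0}^k(-1)^{k-j}q^{\binom{k-j}{2}}\binom{k}{j}_q[j]_q^m$ (with $[0]_q^0=1$). *)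

(* Defs.v *)
From HB Require Import structures.
From mathcomp Require Import all_boot all_order all_algebra.
From mathcomp Require Import reals.
From mathcomp Require Import complex.
Set Implicit Arguments. Unset Strict Implicit. Unset Printing Implicit Defensive.
Import Order.TTheory GRing.Theory Num.Theory.
Local Open Scope ring_scope.

Section QDefs.
Variable F : fieldType.
Implicit Types (q x : F) (n k m : nat).

Definition qnum q k : F := (1 - q ^+ k) / (1 - q).

Definition qfact q n : F := \prod_(1 <= i < n.+1) qnum q i.

Definition qbinom q n k : F :=
  if (k <= n)%N then qfact q n / (qfact q k * qfact q (n - k)) else 0.

(* (1 - b)_q^n = prod_{i=1}^n (1 - b q^(i-1)) *)
Definition qpoch b q n : F := \prod_(0 <= i < n) (1 - b * q ^+ i).

Definition qbern k n x q : F :=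
  if (k <= n)%N then qbinom q n k * x ^+ k * qpoch x q (n - k) else 0.

Definition qBernstein n q (f : F -> F) x : F :=
  \sum_(0 <= k < n.+1) qbern k n x q * f (qnum q k / qnum q n).

Definition qStirling2 m k q : F :=
  (q ^+ 'C(k, 2))^-1 / qfact q k *
  \sum_(0 <= j < k.+1)
     (-1) ^+ (k - j) * q ^+ 'C(k - j, 2) * qbinom q k j * qnum q j ^+ m.

End QDefs.

(* Main.v *)
Require Import Defs.
From HB Require Import structures.
From mathcomp Require Import all_boot all_order all_algebra.
From mathcomp Require Import reals.
From mathcomp Require Import complex.
From mathcomp Require Import ring zify.
Import Order.TTheory GRing.Theory Num.Theory.
Local Open Scope ring_scope.
Section Gen.
Variable F : fieldType.
Variable q : F.
Hypothesis hq : forall k, (0 < k)%N -> q ^+ k != 1.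

Lemma q1 : 1 - q != 0.
Proof. by rewrite subr_eq0 eq_sym -(expr1 q) hq. Qed.

Lemma qnum_neq0 k : (0 < k)%N -> qnum q k != 0.
Proof.
move=> hk; rewrite /qnum mulf_neq0 ?invr_eq0 ?q1 //.
by rewrite subr_eq0 eq_sym hq.
Qed.

Lemma qfact0 : qfact q 0 = 1.
Proof. by rewrite /qfact big_geq. Qed.

Lemma qfactS n : qfact q n.+1 = qfact q n * qnum q n.+1.
Proof. by rewrite /qfact big_nat_recr. Qed.

Lemma qfact_neq0 n : qfact q n != 0.
Proof.
elim: n => [|n IH]; first by rewrite qfact0 oner_eq0.
by rewrite qfactS mulf_neq0 // qnum_neq0.
Qed.

Lemma qbinom_gt n k : (n < k)%N -> qbinom q n k = 0.
Proof. by rewrite /qbinom ltnNge => /negbTE ->. Qed.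

Lemma qbinom_n0 n : qbinom q n 0 = 1.
Proof. by rewrite /qbinom /= subn0 qfact0 mul1r divff // qfact_neq0. Qed.

Lemma qbinom_nn n : qbinom q n n = 1.
Proof. by rewrite /qbinom leqnn subnn qfact0 mulr1 divff // qfact_neq0. Qed.


Lemma qpascal N k :
  qbinom q N.+1 k.+1 = qbinom q N k.+1 + q ^+ (N - k) * qbinom q N k.
Proof.
case: (ltngtP k N) => hk.
- have [d ->] : exists d, N = (k + d.+1)%N by exists (N - k.+1)%N; rewrite addnS -addSn subnKC.
  rewrite /qbinom !ltnS leq_addr addnS ltnS leq_addr.
  rewrite !subSS.
  have e1 : ((k+d).+1 - k = d.+1)%N by rewrite -addnS addKn.
  have e2 : ((k + d) - k = d)%N by rewrite addKn.
  rewrite e1 e2 (qfactS (k+d).+1) (qfactS k) (qfactS d).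
  have h1 := qfact_neq0 (k + d).+1. have h2 := qfact_neq0 k. have h3 := qfact_neq0 d.
  have h4 := @qnum_neq0 k.+1 (ltn0Sn k). have h5 := @qnum_neq0 d.+1 (ltn0Sn d).
  have e3 : q ^+ (k + d).+2 = q ^+ k.+1 * q ^+ d.+1 by rewrite -exprD addSn addnS.
  move: h4 h5; rewrite /qnum e3.
  move: (qfact q (k + d).+1) h1 => A hA.
  move: (qfact q k) h2 => B hB.
  move: (qfact q d) h3 => C hC.
  have hq1 := q1.
  move=> h4 h5.
  rewrite mulf_eq0 negb_or in h4; case/andP: h4 => h4 _.
  rewrite mulf_eq0 negb_or in h5; case/andP: h5 => h5 _.
  field. by rewrite hq1 h5 hC hB h4.
- by rewrite (qbinom_gt N.+1 k.+1) ?ltnS // (qbinom_gt N k.+1) ?(qbinom_gt N k) ?mulr0 ?addr0 // ltnW.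
- by rewrite hk subnn expr0 mul1r !qbinom_nn qbinom_gt ?add0r.
Qed.


Lemma qbinthm x N : qpoch x q N =
  \sum_(0 <= i < N.+1) qbinom q N i * ((-1) ^+ i * q ^+ 'C(i, 2) * x ^+ i).
Proof.
elim: N => [|N IH].
  by rewrite /qpoch big_geq // big_nat1 qbinom_n0 !expr0 !mulr1.
rewrite /qpoch big_nat_recr //= -/(qpoch x q N) IH.
rewrite big_nat_recl //.
under eq_big_nat => i /andP[_ hi] do rewrite qpascal mulrDl.
rewrite big_split /= addrA.
set c := fun i => qbinom q N i * ((-1) ^+ i * q ^+ 'C(i, 2) * x ^+ i).
have hA : qbinom q N.+1 0 * ((-1) ^+ 0 * q ^+ 'C(0, 2) * x ^+ 0) +
    \sum_(0 <= i < N.+1) qbinom q N i.+1 * ((-1) ^+ i.+1 * q ^+ 'C(i.+1, 2) * x ^+ i.+1)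
    = \sum_(0 <= i < N.+1) c i.
  rewrite [RHS](_ : _ = \sum_(0 <= i < N.+2) c i); last first.
    by rewrite [RHS]big_nat_recr //= /c qbinom_gt // mul0r addr0.
  by rewrite [RHS]big_nat_recl // /c !qbinom_n0.
have hB : \sum_(0 <= i < N.+1) q ^+ (N - i) * qbinom q N i *
      ((-1) ^+ i.+1 * q ^+ 'C(i.+1, 2) * x ^+ i.+1)
    = - (x * q ^+ N) * \sum_(0 <= i < N.+1) c i.
  rewrite big_distrr; apply: eq_big_nat => i /andP[_ hi].
  rewrite /c binS bin1.
  have -> : q ^+ N = q ^+ (N - i) * q ^+ i by rewrite -exprD subnK.
  rewrite exprD !exprS /=; ring.
rewrite hA hB /c; ring.
Qed.


Lemma qbinom_mul n k j : (j <= k)%N -> (k <= n)%N ->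
  qbinom q n k * qbinom q k j = qbinom q n j * qbinom q (n - j) (k - j).
Proof.
move=> hjk hkn.
have [a ek] : exists a, k = (j + a)%N by exists (k - j)%N; rewrite subnKC.
have [b en] : exists b, n = (j + a + b)%N by exists (n - k)%N; rewrite -ek subnKC.
subst k n.
have e1 : (j + a + b - (j + a) = b)%N by lia.
have e2 : (j + a - j = a)%N by lia.
have e3 : (j + a + b - j = a + b)%N by lia.
have e4 : (a + b - a = b)%N by lia.
rewrite /qbinom hkn hjk e1 e2 e3 e4.
have -> : (j <= j + a + b)%N by lia.
have -> : (a <= a + b)%N by lia.
have h1 := qfact_neq0 (j + a + b). have h2 := qfact_neq0 (j + a).
have h3 := qfact_neq0 j. have h4 := qfact_neq0 a. have h5 := qfact_neq0 b.
have h6 := qfact_neq0 (a + b).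
field. by rewrite h2 h3 h4 h5 h6.
Qed.


Lemma qnum_q0 i : (0 < i)%N -> qnum (0 : F) i = 1.
Proof. by move=> hi; rewrite /qnum expr0n eqn0Ngt hi /= !subr0 divr1. Qed.

Lemma qfact_q0 i : qfact (0 : F) i = 1.
Proof.
rewrite /qfact big1_seq // => j /andP[_]; rewrite mem_index_iota => /andP[hj _].
exact: qnum_q0.
Qed.

Lemma stir_term m k : qfact q k * q ^+ 'C(k, 2) * qStirling2 m k q =
  \sum_(0 <= j < k.+1)
     (-1) ^+ (k - j) * q ^+ 'C(k - j, 2) * qbinom q k j * qnum q j ^+ m.
Proof.
rewrite /qStirling2.
case: (eqVneq (q ^+ 'C(k, 2)) 0) => h.
  rewrite h mulr0 mul0r.
  move/eqP: h; rewrite expf_eq0 => /andP[hk /eqP q0].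
  case: k hk => [|[|p]] // _.
  rewrite q0 big_nat_recr //= big_nat_recr //=.
  rewrite big1_seq => [|j /andP[_]]; last first.
    rewrite mem_index_iota => /andP[_ hj].
    rewrite expr0n.
    have hb : (0 < 'C(p.+2 - j, 2))%N by rewrite bin_gt0; lia.
    rewrite eqn0Ngt hb.
    by rewrite mulr0 !mul0r.
  have -> : (p.+2 - p.+1 = 1)%N by lia.
  rewrite subnn /qbinom leqnn ltnW // subnn.
  have -> : (p.+2 - p.+1 = 1)%N by lia.
  rewrite !qfact_q0 !qnum_q0 // !expr1n /=.
  rewrite expr0 expr1 !mulr1 divr1; ring.
field. by rewrite h qfact_neq0.
Qed.


Lemma main_gen x n m : (0 < n)%N ->
  qnum q n ^+ m * qBernstein n q (fun t => t ^+ m) x =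
  \sum_(0 <= k < n.+1)
     qbinom q n k * x ^+ k * qfact q k * q ^+ 'C(k, 2) * qStirling2 m k q.
Proof.
move=> hn.
have hN : qnum q n ^+ m != 0 by rewrite expf_neq0 // qnum_neq0.
transitivity (\sum_(0 <= k < n.+1)
   qbinom q n k * x ^+ k * qpoch x q (n - k) * qnum q k ^+ m).
  rewrite /qBernstein big_distrr; apply: eq_big_nat => k /andP[_ hk].
  rewrite /qbern (_ : (k <= n)%N) //= [X in _ * (_ * X)]expr_div_n.
  move: (qnum q n ^+ m) hN => a ha; by field.
symmetry.
transitivity (\sum_(0 <= k < n.+1) \sum_(0 <= j < n.+1)
   qbinom q n k * x ^+ k * ((-1) ^+ (k - j) * q ^+ 'C(k - j, 2) * qbinom q k j * qnum q j ^+ m)).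
  apply: eq_big_nat => k /andP[_ hk].
  rewrite -big_distrr /= (big_cat_nat _ (n := k.+1)) // -stir_term.
  rewrite big1_seq; first by rewrite /= addr0; ring.
  move=> j /andP[_]; rewrite mem_index_iota => /andP[hj _].
  by rewrite qbinom_gt // mulr0 mul0r.
rewrite exchange_big_nat /=.
apply: eq_big_nat => j /andP[_ hj].
rewrite (big_cat_nat _ (n := j)) //.
rewrite big1_seq ?Monoid.simpm; last first.
  move=> k /andP[_]; rewrite mem_index_iota => /andP[_ hk].
  by rewrite (qbinom_gt k j hk) mulr0 mul0r mulr0.
rewrite -{1}(add0n j) big_addn.
have -> : (n.+1 - j = (n - j).+1)%N by lia.
rewrite qbinthm big_distrr big_distrl /=.
apply: eq_big_nat => i /andP[_ hi].
have e1 : (i + j - j = i)%N by lia.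
rewrite e1.
have := @qbinom_mul n (i + j) j (leq_addl _ _) (_ : (i + j <= n)%N).
move=> /(_ ltac:(lia)) hm.
rewrite exprD.
transitivity (qbinom q n (i + j)%N * qbinom q (i + j)%N j * x ^+ i * x ^+ j *
   ((-1) ^+ i * q ^+ 'C(i, 2) * qnum q j ^+ m)); first by ring.
rewrite hm e1; ring.
exact: ltnW.
Qed.
End Gen.

Local Open Scope complex_scope.

Theorem corollary4 (R : realType) (q : R[i]) (n m : nat) (x : R) :
  `|q| < 1 -> (0 < n)%N -> 0 <= x <= 1 ->
  qnum q n ^+ m * qBernstein n q (fun t => t ^+ m) x%:C =
  \sum_(0 <= k < n.+1)
     qbinom q n k * x%:C ^+ k * qfact q k * q ^+ 'C(k, 2) * qStirling2 m k q.
Proof.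
move=> hq hn _.
apply: main_gen => // k hk.
apply/eqP => e.
have := exprn_ilt1 k (normr_ge0 q) hq.
by rewrite -normrX e normr1 ltxx -lt0n hk.
Qed.
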